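(* Let $\mathcal{C} \subseteq \mathbb{R}^n$ be a nonempty closed convex set, let $\theta^* \in \mathbb{R}^n$ (not necessarily in $\mathcal{C}$), let $Z$ be a random vector in $\mathbb{R}^n$ with $\mathbb{E} Z = 0$ and $\mathbb{E}\|Z\|^2 < \infty$, and for $\sigma > 0$ let $Y = \theta^* + \sigma Z$ and $\hat\theta(Y) = \Pi_{\mathcal{C}}(Y)$. Suppose the following ''locally polyhedral'' condition holds: $T_{\mathcal{C}}(\Pi_{\mathcal{C}}(\theta^* ))$ is a polyhedral cone, and there exists $r^* > 0$ such that $$T_{\mathcal{C}}(\Pi_{\mathcal{C}}(\theta^* )) \cap B_{r^*}(0) = F_{\mathcal{C}}(\Pi_{\mathcal{C}}(\theta^* )) \cap B_{r^*}(0).$$ Then $$\lim_{\sigma \downarrow 0} \frac{1}{\sigma^2} M(\hat\theta,\theta^* ) = \lim_{\sigma \downarrow 0} \frac{1}{\sigma^2} E(\hat\theta,\theta^* ) = \delta\big(T_{\mathcal{C}}(\Pi_{\mathcal{C}}(\theta^* )) \cap (\theta^* - \Pi_{\mathcal{C}}(\theta^* ))^\perp\big).$$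
   Context: $\|\cdot\|$ is the Euclidean norm and $\Pi_{\mathcal{C}}(x) = \arg\min_{\theta \in \mathcal{C}} \|x - \theta\|^2$ is the Euclidean projection onto a closed convex set. $B_r(x) = \{u : \|u - x\| \le r\}$. For $v \in \mathbb{R}^n$, $v^\perp = \{u : \langle u, v\rangle = 0\}$. For $\theta_0 \in \mathcal{C}$: $F_{\mathcal{C}}(\theta_0) = \{\theta - \theta_0 : \theta \in \mathcal{C}\}$, and the tangent cone is $T_{\mathcal{C}}(\theta_0) = \mathrm{cl}\{\alpha(\theta - \theta_0) : \alpha \ge 0, \theta \in \mathcal{C}\}$. A polyhedral cone is a set $\{x : Ax \le 0\}$ for a matrix $A$. The misspecified risk is $M(\hat\theta,\theta^* ) = \mathbb{E}\|\hat\theta(Y) - \Pi_{\mathcal{C}}(\theta^* )\|^2$ and the excess risk is $E(\hat\theta,\theta^* ) = \mathbb{E}\|\hat\theta(Y) - \theta^*\|^2 - \|\Pi_{\mathcal{C}}(\theta^* ) - \theta^*\|^2$, with expectations over $Z$. For a closed convex cone $T$, the (generalized) statistical dimension is $\delta(T) = \mathbb{E}\|\Pi_T(Z)\|^2$, the expectation being with respect to the distribution of $Z$. *)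

(* Defs.v *)
From HB Require Import structures.
From mathcomp Require Import all_boot all_order all_algebra.
From mathcomp Require Import all_classical all_reals all_analysis.
Set Implicit Arguments. Unset Strict Implicit. Unset Printing Implicit Defensive.
Import Order.TTheory GRing.Theory Num.Theory.
Import numFieldNormedType.Exports.
Local Open Scope classical_set_scope.
Local Open Scope ring_scope.

Section Defs.
Variables (R : realType) (n : nat).
Local Notation V := 'rV[R]_n.

Definition edot (u v : V) : R := \sum_(i < n) u ord0 i * v ord0 i.
Definition enorm (u : V) : R := Num.sqrt (edot u u).

Definition convex_set_rV (C : set V) : Prop :=
  forall x y, C x -> C y -> forall t : R, 0 <= t <= 1 ->
    C (t *: x + (1 - t) *: y).

Definition is_proj (C : set V) (x p : V) : Prop :=
  C p /\ forall q, C q -> enorm (x - p) ^+ 2 <= enorm (x - q) ^+ 2.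
Definition eproj (C : set V) (x : V) : V := xget 0 [set p | is_proj C x p].

Definition eball (x : V) (r : R) : set V := [set u | enorm (u - x) <= r].

Definition orth (v : V) : set V := [set u | edot u v = 0].

Definition feas (C : set V) (t0 : V) : set V :=
  [set u : V | exists2 t : V, C t & u = t - t0].

Definition tcone (C : set V) (t0 : V) : set V :=
  closure [set u : V | exists a : R, exists t : V,
                         [/\ 0 <= a, C t & u = a *: (t - t0)]].

Definition polyhedral_cone (K : set V) : Prop :=
  exists (m : nat) (A : 'M[R]_(m, n)),
    K = [set x | forall i : 'I_m, (A *m x^T) i ord0 <= 0].

End Defs.

(* Main.v *)
Require Import Defs.
From HB Require Import structures.
From mathcomp Require Import all_boot all_order all_algebra.
From mathcomp Require Import all_classical all_reals all_analysis.
From mathcomp Require Import measurable_realfun.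
From mathcomp Require Import ring lra.
Set Implicit Arguments. Unset Strict Implicit. Unset Printing Implicit Defensive.
Import Order.TTheory GRing.Theory Num.Theory.
Import numFieldNormedType.Exports.
Local Open Scope classical_set_scope.
Local Open Scope ring_scope.

Section Euclid.
Variables (R : realType) (n : nat).
Local Notation V := 'rV[R]_n.
Implicit Types (u v w : V) (a b : R).

Local Notation dot := (@edot R n).
Local Notation N u := (@edot R n u u).

Lemma edotC u v : dot u v = dot v u.
Proof. by rewrite /edot; apply: eq_bigr => i _; rewrite mulrC. Qed.

Lemma edotDl u v w : dot (u + v) w = dot u w + dot v w.
Proof. by rewrite /edot -big_split; apply: eq_bigr => i _; rewrite mxE mulrDl. Qed.

Lemma edotZl a u w : dot (a *: u) w = a * dot u w.
Proof. by rewrite /edot mulr_sumr; apply: eq_bigr => i _; rewrite mxE mulrA. Qed.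

Lemma edotNl u w : dot (- u) w = - dot u w.
Proof. by rewrite -scaleN1r edotZl mulN1r. Qed.

Lemma edotBl u v w : dot (u - v) w = dot u w - dot v w.
Proof. by rewrite edotDl edotNl. Qed.

Lemma edotDr u v w : dot w (u + v) = dot w u + dot w v.
Proof. by rewrite edotC edotDl !(edotC w). Qed.

Lemma edotZr a u w : dot w (a *: u) = a * dot w u.
Proof. by rewrite edotC edotZl edotC. Qed.

Lemma edotNr u w : dot w (- u) = - dot w u.
Proof. by rewrite edotC edotNl edotC. Qed.

Lemma edotBr u v w : dot w (u - v) = dot w u - dot w v.
Proof. by rewrite edotDr edotNr. Qed.

Lemma edot0l w : dot 0 w = 0.
Proof. by rewrite -(scale0r (0 : V)) edotZl mul0r. Qed.

Lemma edot0r w : dot w 0 = 0.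
Proof. by rewrite edotC edot0l. Qed.

Definition edotE := (edotDl, edotDr, edotZl, edotZr, edotNl, edotNr, edotBl, edotBr, edot0l, edot0r).

Lemma edot_ge0 u : 0 <= N u.
Proof. by rewrite /edot; apply: sumr_ge0 => i _; rewrite -expr2 sqr_ge0. Qed.

Lemma edot_eq0 u : N u = 0 -> u = 0.
Proof.
move=> h; apply/rowP => i; rewrite mxE.
have := @psumr_eq0P R _ xpredT (fun i => u ord0 i * u ord0 i) (fun j _ => ltac:(by rewrite /= -expr2 sqr_ge0)) h i isT.
by move/eqP; rewrite mulf_eq0 orbb => /eqP.
Qed.

Lemma enorm_sq u : enorm u ^+ 2 = N u.
Proof. by rewrite /enorm sqr_sqrtr // edot_ge0. Qed.

Lemma enorm_ge0 u : 0 <= enorm u.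
Proof. exact: sqrtr_ge0. Qed.

Lemma edot_le u v : 2 * dot u v <= N u + N v.
Proof.
have := edot_ge0 (u - v); rewrite !edotE (edotC v u).
lra.
Qed.

Lemma coord_le_norm u i : `|u ord0 i| <= `|u|.
Proof.
rewrite (_ : `|u| = mx_norm u) // mx_normrE.
exact: (le_bigmax _ (fun ij : 'I_1 * 'I_n => `|u ij.1 ij.2|) (ord0, i)).
Qed.

Lemma norm_le_edot u : `|u| ^+ 2 <= N u.
Proof.
rewrite (_ : `|u| = mx_norm u) //.
have [->|] := eqVneq (mx_norm u) 0.
  by rewrite expr0n /= edot_ge0.
move/mx_norm_neq0 => [[i j] /= ->]; rewrite (ord1 i).
rewrite /edot (bigD1 j) //= -expr2 real_normK ?num_real //.
by rewrite lerDl sumr_ge0 // => k _; rewrite -expr2 sqr_ge0.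
Qed.

Lemma edot_le_norm u : N u <= n%:R * `|u| ^+ 2.
Proof.
apply: (@le_trans _ _ (\sum_(i < n) `|u| ^+ 2)); last first.
  by rewrite sumr_const card_ord mulr_natl.
rewrite /edot; apply: ler_sum => i _; have := coord_le_norm u i.
rewrite ler_norml => /andP[h1 h2]; nra.
Qed.

End Euclid.
Section Topo.
Variables (R : realType) (n : nat).
Local Notation V := 'rV[R]_n.
Implicit Types (u v w : V) (a b : R).
Local Notation dot := (@edot R n).
Local Notation N u := (@edot R n u u).

Lemma cont_dot (X : topologicalType) (f g : X -> V) :
  continuous f -> continuous g -> continuous (fun x => dot (f x) (g x)).
Proof.
move=> fc gc x.
have coordc (h : X -> V) i : continuous h -> {for x, continuous (fun x => h x ord0 i)}.
  move=> hc; apply: (@continuous_comp _ _ _ h (fun M : V => M ord0 i)).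
    exact: hc.
  exact: coord_continuous.
rewrite /edot.
suff H : forall s : seq 'I_n, (fun y => \sum_(i <- s) f y ord0 i * g y ord0 i) @ x -->
   \sum_(i <- s) f x ord0 i * g x ord0 i by exact: H.
elim => [|i s IH].
  rewrite big_nil.
  have -> : (fun y => \sum_(i <- [::]) f y ord0 i * g y ord0 i) = cst 0.
    by apply/funext => y; rewrite big_nil.
  exact: cvg_cst.
rewrite big_cons.
have -> : (fun y => \sum_(j <- i :: s) f y ord0 j * g y ord0 j) =
   (fun y => f y ord0 i * g y ord0 i + \sum_(j <- s) f y ord0 j * g y ord0 j).
  by apply/funext => y; rewrite big_cons.
apply: cvgD => //.
by apply: cvgM; apply: coordc.
Unshelve. all: by end_near.
Qed.

Lemma closed_le_fun (f : V -> R) c : continuous f -> closed [set x | f x <= c].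
Proof.
move=> fc; apply: (@closed_comp _ _ f [set y | y <= c]).
  by move=> x _; exact: fc.
exact: closed_le.
Qed.

Lemma closed_eq_fun (f : V -> R) c : continuous f -> closed [set x | f x = c].
Proof.
move=> fc; apply: (@closed_comp _ _ f [set y | y = c]).
  by move=> x _; exact: fc.
exact: closed_eq.
Qed.

Lemma lip_cont (G : V -> V) :
  (forall x y, N (G x - G y) <= N (x - y)) -> continuous G.
Proof.
move=> hG x; apply/(@cvgrPdist_lt _ _ _ (nbhs x) (nbhs_filter x)) => e e0.
have n1 : 0 < n.+1%:R :> R by rewrite ltr0n.
pose d := e / n.+1%:R.
have d0 : 0 < d by rewrite divr_gt0.
near=> y.
have hy : `|x - y| < d by near: y; exact: (@cvgr_dist_lt R V V (nbhs x) _ id x cvg_id d d0).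
have h1 := norm_le_edot (G x - G y).
have h2 := hG x y.
have h3 := edot_le_norm (x - y).
have h4 : `|x - y| ^+ 2 <= d ^+ 2.
  by rewrite lerXn2r // ?nnegrE ?normr_ge0 ?ltW.
have h5 : n%:R * d ^+ 2 < e ^+ 2.
  rewrite /d expr_div_n mulrA ltr_pdivrMr ?exprn_gt0 //.
  rewrite -natrX; have : (n < n.+1 ^ 2)%N.
    by rewrite expnS expn1; apply: (@leq_trans n.+1) => //; rewrite leq_pmulr.
  rewrite -(ltr_nat R) => hn.
  by rewrite mulrC ltr_pM2l ?exprn_gt0.
have h6 : `|G x - G y| ^+ 2 < e ^+ 2.
  apply: (le_lt_trans h1); apply: (le_lt_trans h2); apply: (le_lt_trans h3).
  apply: le_lt_trans h5; apply: ler_wpM2l => //.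
have := normr_ge0 (G x - G y); rewrite !expr2 in h6; nra.
Unshelve. all: by end_near.
Qed.

Lemma compact_ball M : compact [set u : V | `|u| <= M].
Proof.
apply: bounded_closed_compact.
  exists M; split; first exact: num_real.
  by move=> M' hM' u /= hu; apply: (le_trans hu); apply: ltW.
apply: (@closed_comp _ _ (fun u : V => `|u|) [set y | y <= M]).
  by move=> x _; exact: norm_continuous.
exact: closed_le.
Qed.

End Topo.
Section Alg.
Variables (R : realType) (n : nat).
Local Notation V := 'rV[R]_n.
Implicit Types (u v w a b : V) (t : R).
Local Notation dot := (@edot R n).
Local Notation N u := (@edot R n u u).

Lemma normB a b : N (a - b) = N a - 2 * dot a b + N b.
Proof. rewrite !edotE (edotC b a); ring. Qed.

Lemma normD a b : N (a + b) = N a + 2 * dot a b + N b.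
Proof. rewrite !edotE (edotC b a); ring. Qed.

Lemma normZ t a : N (t *: a) = t ^+ 2 * N a.
Proof. rewrite !edotE; ring. Qed.

Lemma normN a : N (- a) = N a.
Proof. rewrite !edotE; ring. Qed.

End Alg.

Section Proj.
Variables (R : realType) (n : nat).
Local Notation V := 'rV[R]_n.
Implicit Types (u v w a b x y p q : V) (t : R).
Local Notation dot := (@edot R n).
Local Notation N u := (@edot R n u u).
Variable C : set V.
Hypotheses (C0 : C !=set0) (Ccl : closed C) (Ccvx : convex_set_rV C).

Lemma is_projE x p : is_proj C x p <-> C p /\ forall q, C q -> N (x - p) <= N (x - q).
Proof.
rewrite /is_proj; split => -[Cp h]; split => // q Cq; have := h q Cq;
  by rewrite !enorm_sq.
Qed.

Lemma cont_sub x : continuous (fun q : V => x - q).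
Proof.
move=> q; have := @continuousB R V V (cst x) id q (@cst_continuous _ _ x q) (@cvg_id _ (nbhs q)).
by [].
Qed.

Lemma proj_exists x : exists p, is_proj C x p.
Proof.
have [c0 Cc0] := C0.
pose rho := N (x - c0).
pose S := C `&` [set q | N (x - q) <= rho].
have fc : continuous (fun q : V => N (x - q)).
  by apply: cont_dot; exact: cont_sub.
have Scl : closed S by apply: closedI => //; exact: closed_le_fun.
have Scp : compact S.
  apply: (@subclosed_compact _ S [set u : V | `|u| <= `|x| + (1 + rho)] Scl (@compact_ball R n _)).
  move=> q [_ /= hq] /=.
  have h1 := norm_le_edot (x - q).
  have h2 : `|x - q| <= 1 + rho.
    have := normr_ge0 (x - q); have := edot_ge0 (x - c0).
    rewrite expr2 in h1; rewrite -/rho in hq; nra.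
  have -> : q = x - (x - q) by rewrite opprB addrC subrK.
  by apply: (le_trans (ler_normB _ _)); rewrite lerD2l.
have [c Sc hc] := @compact_EVT_min _ _ (fun q : V => N (x - q)) S
  (ex_intro _ c0 (conj Cc0 (lexx _))) Scp (continuous_subspaceT fc).
exists c; apply/is_projE; move: Sc; rewrite inE => -[Cc hcr]; split => // q Cq.
have [qr|qr] := leP (N (x - q)) rho.
  by apply: hc; rewrite inE.
by apply: (le_trans hcr); apply: ltW.
Qed.

Lemma proj_var x p : is_proj C x p -> forall c, C c -> dot (x - p) (c - p) <= 0.
Proof.
move=> /is_projE [Cp hp] c Cc.
set a := x - p; set d := c - p.
have key t : 0 < t <= 1 -> 0 <= - 2 * t * dot a d + t ^+ 2 * N d.
  move=> /andP[t0 t1].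
  have Cct : C (t *: c + (1 - t) *: p) by apply: Ccvx => //; rewrite ltW.
  have := hp _ Cct.
  have -> : x - (t *: c + (1 - t) *: p) = a - t *: d.
    by apply/rowP => i; rewrite !mxE; ring.
  rewrite (normB a (t *: d)) normZ edotZr; lra.
rewrite leNgt; apply/negP => dpos.
have Nd0 := edot_ge0 d.
pose t := dot a d / (dot a d + N d).
have den0 : 0 < dot a d + N d by lra.
have t0 : 0 < t by rewrite divr_gt0.
have tden : t * (dot a d + N d) = dot a d by rewrite /t divfK // gt_eqF.
have t1 : t <= 1 by rewrite ler_pdivrMr // mul1r; lra.
have := key t; rewrite t0 t1 => /(_ isT).
rewrite expr2; nra.
Qed.

Lemma var_proj x p : C p -> (forall c, C c -> dot (x - p) (c - p) <= 0) ->
  is_proj C x p.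
Proof.
move=> Cp h; apply/is_projE; split => // q Cq.
have -> : x - q = (x - p) - (q - p) by apply/rowP => i; rewrite !mxE; ring.
rewrite (normB (x - p) (q - p)); have := h q Cq; have := edot_ge0 (q - p); lra.
Qed.

Lemma proj_unique x p p' : is_proj C x p -> is_proj C x p' -> p = p'.
Proof.
move=> hp hp'; have v1 := proj_var hp; have v2 := proj_var hp'.
case: hp => Cp _; case: hp' => Cp' _.
have h1 := v1 _ Cp'; have h2 := v2 _ Cp.
apply/eqP; rewrite -subr_eq0; apply/eqP/edot_eq0.
have e1 : p' - p = - (p - p') by rewrite opprB.
have e : x - p' = (x - p) + (p - p') by apply/rowP => i; rewrite !mxE; ring.
move: h1 h2; rewrite e e1 edotNr (edotDl (x - p) (p - p')) => h1 h2.
have := edot_ge0 (p - p'); move=> h3.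
by apply/eqP; rewrite eq_le; apply/andP; split; lra.
Qed.

Lemma eproj_spec x : is_proj C x (eproj C x).
Proof. exact: xgetPex (proj_exists x). Qed.

Lemma eproj_in x : C (eproj C x).
Proof. by case: (eproj_spec x). Qed.

Lemma eproj_var x c : C c -> dot (x - eproj C x) (c - eproj C x) <= 0.
Proof. by move=> Cc; apply: (proj_var (eproj_spec x)). Qed.

Lemma eproj_min x q : C q -> N (x - eproj C x) <= N (x - q).
Proof. by have /is_projE[_ h] := eproj_spec x; exact: h. Qed.

Lemma eprojE x p : C p -> (forall c, C c -> dot (x - p) (c - p) <= 0) ->
  eproj C x = p.
Proof. by move=> Cp h; apply: (proj_unique (eproj_spec x)); exact: var_proj. Qed.

Lemma lip_key a b c : dot ((b - a) + c) (- a) <= 0 -> dot c a <= 0 -> N a <= N b.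
Proof.
rewrite !edotE => h1 h2.
have := edot_le b a; have := edot_ge0 b; lra.
Qed.

Lemma eproj_lip x y : N (eproj C x - eproj C y) <= N (x - y).
Proof.
set p := eproj C x; set p' := eproj C y.
have h1 : dot (x - p) (p' - p) <= 0 by apply: eproj_var; exact: eproj_in.
have h2 : dot (y - p') (p - p') <= 0 by apply: eproj_var; exact: eproj_in.
have e1 : x - p = ((x - y) - (p - p')) + (y - p') by apply/rowP => i; rewrite !mxE; ring.
have e2 : p' - p = - (p - p') by rewrite opprB.
rewrite e1 e2 in h1.
exact: lip_key h1 h2.
Qed.

Lemma eproj_cont : continuous (eproj C).
Proof. apply: lip_cont; exact: eproj_lip. Qed.

End Proj.
Section Meas.
Variables (R : realType) (n : nat) (d : measure_display) (T : measurableType d).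
Local Notation V := 'rV[R]_n.
Variable Z : T -> V.
Hypothesis hZ : forall i : 'I_n, measurable_fun setT (fun w => Z w ord0 i).

Lemma meas_count (U : countType) (m : T -> U) (H : U -> R) :
  (forall c, measurable (m @^-1` [set c])) -> measurable_fun setT (fun w => H (m w)).
Proof.
move=> hm _ B mB; rewrite setTI.
have -> : (fun w => H (m w)) @^-1` B =
    \bigcup_(c : U) (m @^-1` [set c] `&` [set _ : T | B (H c)]).
  apply/seteqP; split => w /=.
    by move=> Bw; exists (m w) => //.
  by move=> [c _ [/= -> ]].
apply: countable_bigcupT_measurable; first exact: countableP.
move=> c; apply: measurableI => //.
case: (pselect (B (H c))) => hb.
  by rewrite (_ : [set _ | _] = setT) //; apply/seteqP; split.
by rewrite (_ : [set _ | _] = set0) //; apply/seteqP; split.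
Qed.

Lemma meas_forall (P : 'I_n -> set T) : (forall i, measurable (P i)) ->
  measurable [set w | forall i, P i w].
Proof.
move=> hP.
suff H : forall s : seq 'I_n, measurable [set w | forall i, i \in s -> P i w].
  rewrite (_ : [set w | _] = [set w | forall i, i \in enum 'I_n -> P i w]).
    exact: H.
  by apply/seteqP; split => w /= h i; [move=> _; exact: h | apply: h; rewrite mem_enum].
elim => [|i s IH].
  by rewrite (_ : [set w | _] = setT) //; apply/seteqP; split.
rewrite (_ : [set w | _] = P i `&` [set w | forall j, j \in s -> P j w]).
  exact: measurableI.
apply/seteqP; split => w /=.
  by move=> h; split => [|j js]; apply: h; rewrite inE ?eqxx ?js ?orbT.
by move=> [Pi h] j; rewrite inE => /orP[/eqP ->//|]; exact: h.
Qed.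

Definition mgrid (k : nat) (w : T) : {ffun 'I_n -> int} :=
  [ffun i => Num.floor (k.+1%:R * Z w ord0 i)].

Definition zgrid (k : nat) (w : T) : V :=
  \row_i ((mgrid k w i)%:~R / k.+1%:R).

Lemma mgrid_fiber k c : measurable (mgrid k @^-1` [set c]).
Proof.
rewrite (_ : _ @^-1` _ = [set w | forall i,
    [set w | (c i)%:~R <= k.+1%:R * Z w ord0 i < (c i + 1)%:~R] w]).
  apply: meas_forall => i.
  have mf : measurable_fun setT (fun w => k.+1%:R * Z w ord0 i).
    by apply: measurable_funM => //; exact: measurable_cst.
  have := mf measurableT _ (measurable_itv `[(c i)%:~R, (c i + 1)%:~R[).
  rewrite setTI; congr measurable; apply/seteqP; split => w /=;
    by rewrite in_itv /=.
apply/seteqP; split => w /=.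
  by move=> <- i; rewrite ffunE floor_itv.
move=> h; apply/ffunP => i; rewrite ffunE.
by apply/eqP; rewrite floor_eq; exact: h.
Qed.

Lemma zgrid_close k w i : `|Z w ord0 i - zgrid k w ord0 i| <= k.+1%:R^-1.
Proof.
rewrite /zgrid mxE /mgrid ffunE.
set x := Z w ord0 i.
have k0 : 0 < k.+1%:R :> R by rewrite ltr0n.
have := floor_itv (k.+1%:R * x); set f := Num.floor _.
rewrite intrD (_ : 1%:~R = 1 :> R) // => /andP[h1 h2].
set y := (f%:~R : R) in h1 h2 *.
have e : x - y / k.+1%:R = (k.+1%:R * x - y) / k.+1%:R by field; rewrite gt_eqF.
rewrite e ger0_norm; last by apply: divr_ge0; [lra | exact: ltW k0].
rewrite -[X in _ <= X]mul1r ler_pM2r ?invr_gt0 //; lra.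
Qed.

Lemma zgrid_cvg w : zgrid k w @[k --> \oo] --> Z w.
Proof.
apply/cvgrPdist_lt => e e0.
near=> k.
have hk : k.+1%:R^-1 < e.
  near: k; exists (Num.trunc e^-1) => // k /= hk.
  rewrite invf_plt ?posrE ?ltr0n //.
  apply: (lt_le_trans (truncnS_gt _)); rewrite ler_nat //.
apply: le_lt_trans hk.
rewrite (_ : `|Z w - zgrid k w| = mx_norm (Z w - zgrid k w)) // mx_normrE.
apply: bigmax_le => //= -[a j] _ /=.
rewrite (ord1 a) !mxE.
by have := zgrid_close k w j; rewrite /zgrid mxE.
Unshelve. all: by end_near.
Qed.

Lemma meas_comp_cont (h : V -> R) : continuous h ->
  measurable_fun setT (fun w => h (Z w)).
Proof.
move=> hc.
apply: (@measurable_fun_cvg _ _ _ _ (fun k w => h (zgrid k w))).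
  move=> k.
  pose H (c : {ffun 'I_n -> int}) : R := h (\row_i ((c i)%:~R / k.+1%:R)).
  exact: (@meas_count _ (mgrid k) H (@mgrid_fiber k)).
move=> w _.
apply: (@cvg_comp _ _ _ (fun k => zgrid k w) h _ (nbhs (Z w))).
  exact: zgrid_cvg.
exact: hc.
Qed.

End Meas.
Section Cone.
Variables (R : realType) (n : nat).
Local Notation V := 'rV[R]_n.
Local Notation dot := (@edot R n).
Local Notation N u := (@edot R n u u).

Lemma polyE m (A : 'M[R]_(m, n)) (x : V) i :
  (A *m x^T) i ord0 = \sum_j A i j * x ord0 j.
Proof. by rewrite mxE; apply: eq_bigr => j _; rewrite mxE. Qed.

Lemma poly_cone (K : set V) : polyhedral_cone K ->
  forall x a, K x -> 0 <= a -> K (a *: x).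
Proof.
move=> [m [A ->]] x a /= Kx a0 i.
rewrite polyE (eq_bigr (fun j => a * (A i j * x ord0 j))); last first.
  by move=> j _; rewrite mxE; ring.
by rewrite -mulr_sumr -polyE; apply: mulr_ge0_le0.
Qed.

Lemma poly_convex (K : set V) : polyhedral_cone K -> convex_set_rV K.
Proof.
move=> [m [A ->]] x y /= Kx Ky t /andP[t0 t1] i.
rewrite polyE (eq_bigr (fun j => t * (A i j * x ord0 j) + (1 - t) * (A i j * y ord0 j)));
  last by move=> j _; rewrite !mxE; ring.
rewrite big_split /= -!mulr_sumr -!polyE.
have := Kx i; have := Ky i; nra.
Qed.

Lemma eball0 (u : V) r : 0 <= r -> N u <= r ^+ 2 -> eball 0 r u.
Proof.
move=> r0 h; rewrite /eball /= subr0.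
have := enorm_sq u; have := enorm_ge0 u; rewrite expr2 in h; move=> h1 h2.
rewrite expr2 in h2; nra.
Qed.

End Cone.

Section Local.
Variables (R : realType) (n : nat).
Local Notation V := 'rV[R]_n.
Local Notation dot := (@edot R n).
Local Notation N u := (@edot R n u u).
Variable C : set V.
Hypotheses (C0 : C !=set0) (Ccl : closed C) (Ccvx : convex_set_rV C).
Variable theta : V.
Local Notation t0 := (eproj C theta).
Local Notation v := (theta - eproj C theta).
Local Notation TC := (tcone C (eproj C theta)).
Local Notation K := (tcone C (eproj C theta) `&` orth (theta - eproj C theta)).
Hypothesis poly : polyhedral_cone TC.
Variable rs : R.
Hypothesis rs0 : 0 < rs.
Hypothesis loc : TC `&` eball 0 rs = feas C t0 `&` eball 0 rs.

Lemma TC_closed : closed TC.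
Proof. exact: closed_closure. Qed.

Lemma gen_TC a c : 0 <= a -> C c -> TC (a *: (c - t0)).
Proof. by move=> a0 Cc; apply: subset_closure; exists a, c. Qed.

Lemma TC0 : TC 0.
Proof.
have := @gen_TC 0 t0 (lexx _) (eproj_in C0 Ccl theta).
by rewrite scale0r.
Qed.

Lemma cont_dotr (a : V) : continuous (fun u : V => dot u a).
Proof.
apply: cont_dot.
  by move=> x; apply: (@cvg_id _ (nbhs x)).
exact: cst_continuous.
Qed.

Lemma K_closed : closed K.
Proof. apply: closedI; first exact: TC_closed. rewrite /orth.
exact: (@closed_eq_fun R n _ 0 (@cont_dotr (theta - eproj C theta))).
Qed.

Lemma K_convex : convex_set_rV K.
Proof.
move=> x y [Tx ox] [Ty oy] t t01; split; first exact: poly_convex.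
by rewrite /orth /= edotDl !edotZl ox oy !mulr0 addr0.
Qed.

Lemma K0 : K !=set0.
Proof. by exists 0; split; [exact: TC0 | rewrite /orth /= edot0l]. Qed.

Lemma K_cone x a : K x -> 0 <= a -> K (a *: x).
Proof.
move=> [Tx ox] a0; split; first exact: poly_cone.
by rewrite /orth /= edotZl ox mulr0.
Qed.


Lemma algA (w a q : V) s : dot (w + s *: a) (- (s *: q)) = - s * dot w q - s ^+ 2 * dot a q.
Proof. rewrite edotNr edotDl !edotZl !edotZr; ring. Qed.

Lemma algB (w a b : V) s : dot (w + s *: a) (s *: b) = s * dot w b + s ^+ 2 * dot a b.
Proof. rewrite edotDl !edotZl !edotZr; ring. Qed.

Lemma dot_zq (z q : V) : dot (z - q) q <= N z.
Proof. rewrite edotBl; have := edot_le z q; have := edot_ge0 z; have := edot_ge0 q; lra. Qed.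

Variable z : V.
Local Notation p s := (eproj C (theta + s *: z)).
Definition qq s := s^-1 *: (p s - t0).
Local Notation k := (eproj K z).

Let KC0 := K0.
Let KCl := K_closed.
Let KCvx := K_convex.
Let Cin := eproj_in C0 Ccl.

Lemma qq_eq s : 0 < s -> p s = t0 + s *: qq s.
Proof.
move=> s0; rewrite /qq scalerA mulfV ?gt_eqF // scale1r.
by apply/rowP => i; rewrite !mxE; ring.
Qed.

Lemma qq_sub s : 0 < s -> p s - t0 = s *: qq s.
Proof.
move=> s0; rewrite {1}qq_eq //.
by apply/rowP => i; rewrite !mxE; ring.
Qed.

Lemma qq_T s : 0 < s -> TC (qq s).
Proof. by move=> s0; apply: gen_TC => //; rewrite invr_ge0 ltW. Qed.

Lemma qq_v s : 0 < s -> dot v (qq s) <= 0.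
Proof.
move=> s0; have := eproj_var C0 Ccl Ccvx theta (Cin (theta + s *: z)).
by rewrite qq_sub // edotZr pmulr_rle0.
Qed.

Lemma qq_v2 s : 0 < s -> - dot v (qq s) <= s * dot (z - qq s) (qq s).
Proof.
move=> s0; have := eproj_var C0 Ccl Ccvx (theta + s *: z) (Cin theta).
have -> : theta + s *: z - p s = v + s *: (z - qq s).
  by rewrite qq_eq //; apply/rowP => i; rewrite !mxE; ring.
have -> : t0 - p s = - (s *: qq s).
  by rewrite qq_eq //; apply/rowP => i; rewrite !mxE; ring.
rewrite algA => h.
have : s * (- dot v (qq s) - s * dot (z - qq s) (qq s)) <= 0.
  by rewrite expr2 in h; lra.
rewrite pmulr_rle0 //; lra.
Qed.

Lemma qq_N s : 0 < s -> N (qq s) <= N z.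
Proof.
move=> s0; have := eproj_lip C0 Ccl Ccvx (theta + s *: z) theta.
have -> : theta + s *: z - theta = s *: z by rewrite addrC addKr.
by rewrite qq_sub // !normZ ler_pM2l // exprn_gt0.
Qed.

Lemma qq_vbound s : 0 < s -> - dot v (qq s) <= s * N z.
Proof.
move=> s0; apply: (le_trans (qq_v2 s0)); rewrite ler_pM2l //; exact: dot_zq.
Qed.

Lemma qq_K s u : 0 < s -> K u -> s ^+ 2 * N u <= rs ^+ 2 ->
  dot (z - qq s) (u - qq s) <= 0.
Proof.
move=> s0 [Tu ou] hu.
have hsu : (TC `&` eball 0 rs) (s *: u).
  split; first by apply: poly_cone => //; exact: ltW.
  by apply: eball0; [exact: ltW | rewrite normZ].
rewrite loc in hsu; case: hsu => -[c Cc e] _.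
have := eproj_var C0 Ccl Ccvx (theta + s *: z) Cc.
have -> : theta + s *: z - p s = v + s *: (z - qq s).
  by rewrite qq_eq //; apply/rowP => i; rewrite !mxE; ring.
have -> : c - p s = s *: (u - qq s).
  have -> : c = s *: u + t0 by rewrite e subrK.
  by rewrite qq_eq //; apply/rowP => i; rewrite !mxE; ring.
rewrite algB edotBr (edotC _ u) ou sub0r.
have := qq_v s0 => h1 h2.
have h3 : 0 <= s * - dot v (qq s) by apply: mulr_ge0; [exact: ltW | lra].
have : s ^+ 2 * dot (z - qq s) (u - qq s) <= 0 by lra.
by rewrite pmulr_rle0 // exprn_gt0.
Qed.

Lemma k_N : N k <= N z.
Proof.
have := eproj_var KC0 KCl KCvx z (K_cone (eproj_in KC0 KCl z) (lexx 0)).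
rewrite scale0r sub0r edotNr edotBl.
have := edot_le z k; have := edot_ge0 z; lra.
Qed.

Lemma k_orth : dot (z - k) k = 0.
Proof.
have kK := eproj_in KC0 KCl z.
have h1 := eproj_var KC0 KCl KCvx z (K_cone kK (ler0n R 0)).
have h2 := eproj_var KC0 KCl KCvx z (K_cone kK (ler0n R 2)).
rewrite scale0r sub0r edotNr in h1.
have e : 2%:R *: k - k = k by rewrite scaler_nat mulr2n addrK.
rewrite e in h2.
by apply/eqP; rewrite eq_le h2 /=; lra.
Qed.


Lemma near_pos : \forall s \near 0^'+, 0 < s :> R.
Proof. exact: nbhs_right_gt. Qed.

Lemma cl_sub (F : set_system V) (q : V) (A B : set V) :
  cluster F q -> F A -> closed B -> A `<=` B -> B q.
Proof.
rewrite clusterE => h FA cB AB.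
have := h A FA; move/(closureS AB); by rewrite -(closure_id B).1.
Qed.

Lemma evF (A : set V) (P : set R) : (\forall s \near 0^'+, P s) ->
  (forall s, 0 < s -> P s -> A (qq s)) -> (qq @ 0^'+) A.
Proof.
move=> hP h; apply: (@filterS _ _ _ ([set s | 0 < s] `&` P)).
  by move=> s [s0 Ps]; exact: h.
exact: (filterI near_pos hP).
Qed.

Lemma qq_cluster (q : V) : cluster (qq @ 0^'+) q -> q = k.
Proof.
move=> cq.
have Tq : TC q.
  apply: (cl_sub cq (A := TC)) => //; last exact: TC_closed.
  apply: (evF (P := setT)); first by apply: nearW.
  move=> s s0 _; exact: qq_T.
have vq : dot q v <= 0.
  apply: (cl_sub cq (A := [set u | dot u v <= 0]) (B := [set u | dot u v <= 0])) => //.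
  - apply: (evF (P := setT)); first by apply: nearW.
    move=> s s0 _ /=; rewrite edotC; exact: qq_v.
  - exact: closed_le_fun (@cont_dotr v).
have Nz0 := edot_ge0 z.
have vq2 e : 0 < e -> dot q (- v) <= e.
  move=> e0.
  apply: (cl_sub cq (A := [set u | dot u (- v) <= e]) (B := [set u | dot u (- v) <= e])) => //.
  - apply: (evF (P := [set s | s < e / (N z + 1)])).
      by apply: nbhs_right_lt; rewrite divr_gt0 //; lra.
    move=> s s0 /= se.
    rewrite edotNr edotC.
    apply: (le_trans (qq_vbound s0)).
    move: se; rewrite ltr_pdivlMr; last by lra.
    nra.
  - exact: closed_le_fun (@cont_dotr (- v)).
have oq : dot q v = 0.
  apply/eqP; rewrite eq_le vq /=; rewrite leNgt; apply/negP => h.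
  have := vq2 (- dot q v / 2%:R); rewrite edotNr; lra.
have Kq : K q by split.
have varq : forall u, K u -> dot (z - q) (u - q) <= 0.
  move=> u Ku.
  have Nu0 := edot_ge0 u.
  apply: (cl_sub cq (A := [set w | dot (z - w) (u - w) <= 0]) (B := [set w | dot (z - w) (u - w) <= 0])) => //.
  - apply: (evF (P := [set s | s < rs / (N u + 1)])).
      by apply: nbhs_right_lt; rewrite divr_gt0 //; lra.
    move=> s s0 /= su.
    apply: qq_K => //.
    move: su; rewrite ltr_pdivlMr; last by lra.
    move=> su; rewrite !expr2.
    have a0 : 0 <= s * (N u + 1) by apply: mulr_ge0; lra.
    have h1 : (s * (N u + 1)) * (s * (N u + 1)) <= rs * rs by nra.
    have ss : 0 <= s * s by nra.
    have h2 : s * s * N u <= (s * (N u + 1)) * (s * (N u + 1)).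
      have -> : (s * (N u + 1)) * (s * (N u + 1)) = (s * s) * ((N u + 1) * (N u + 1)) by ring.
      apply: ler_wpM2l => //; nra.
    lra.
  - apply: closed_le_fun; apply: cont_dot; exact: cont_sub.
by apply/esym; apply: (eprojE KC0 KCl KCvx Kq).
Qed.

Lemma qq_cvg : qq s @[s --> 0^'+] --> k.
Proof.
pose M := 2 + N z.
have Nz0 := edot_ge0 z.
have bnd (u : V) : N u <= N z -> `|u| <= 1 + N z.
  move=> h; have h1 := norm_le_edot u; have := normr_ge0 u.
  rewrite expr2 in h1; nra.
have FV : (qq @ 0^'+) [set u : V | `|u| <= M].
  apply: (evF (P := setT)); first by apply: nearW.
  move=> s s0 _ /=; apply: (le_trans (bnd _ (qq_N s0))); rewrite /M; lra.
have nV : nbhs k [set u : V | `|u| <= M].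
  have hk := bnd _ k_N.
  near=> u => /=.
  have : `|k - u| < 1.
    by near: u; exact: (@cvgr_dist_lt R V V (nbhs k) _ id k cvg_id 1 ltr01).
  have : `|u| <= `|k| + `|k - u|.
    by have := ler_normB k (k - u); rewrite opprB (addrC k) subrK.
  rewrite /M; lra.
have cpt := @compact_ball R n M.
apply: (compact_cluster_set1 (@norm_hausdorff _ _) cpt nV) => //.
apply/seteqP; split => q /=; first exact: qq_cluster.
move=> ->.
have [q' [_ cq']] := cpt _ _ FV.
by rewrite -(qq_cluster cq').
Unshelve. all: by end_near.
Qed.


Lemma qq_id1 s : 0 < s -> s ^- 2 * N (p s - t0) = N (qq s).
Proof. by move=> s0; rewrite qq_sub // normZ mulKf // expf_neq0 // gt_eqF. Qed.

Lemma qq_id2 s : 0 < s ->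
  s ^- 2 * (N (p s - theta) - N (t0 - theta)) = N (qq s) - 2 * (dot (qq s) v / s).
Proof.
move=> s0.
have -> : p s - theta = s *: qq s - v.
  by rewrite qq_eq //; apply/rowP => i; rewrite !mxE; ring.
have -> : t0 - theta = - v by rewrite opprB.
rewrite normB (normZ s (qq s)) (edotZl s (qq s)) normN.
by field; rewrite gt_eqF.
Qed.

Lemma r_bounds s : 0 < s ->
  - dot (z - qq s) (qq s) <= dot (qq s) v / s <= 0.
Proof.
move=> s0; apply/andP; split.
  rewrite lerNl -mulNr ler_pdivrMr // mulrC edotC; exact: qq_v2.
by rewrite pmulr_lle0 ?invr_gt0 // edotC; exact: qq_v.
Qed.

Lemma contN : continuous (fun u : V => N u).
Proof.
by apply: cont_dot => x; apply: (@cvg_id _ (nbhs x)).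
Qed.

Lemma lim1 : (fun s => s ^- 2 * N (p s - t0)) @ 0^'+ --> N k.
Proof.
apply: (@cvg_trans _ ((fun s => N (qq s)) @ 0^'+)).
  by apply: near_eq_cvg; near=> s; rewrite qq_id1 //; near: s; exact: near_pos.
exact: (cvg_comp qq (fun u => N u) qq_cvg (@contN k)).
Unshelve. all: by end_near.
Qed.

Lemma r_cvg : (fun s => dot (qq s) v / s) @ 0^'+ --> 0.
Proof.
have hD : (fun s => - dot (z - qq s) (qq s)) @ 0^'+ --> 0.
  suff : (fun s => - dot (z - qq s) (qq s)) @ 0^'+ --> - dot (z - k) k.
    by rewrite k_orth oppr0.
  apply: cvgN.
  apply: (cvg_comp qq (fun u => dot (z - u) u) qq_cvg) => /=.
  have hc : continuous (fun u : V => dot (z - u) u).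
    by apply: cont_dot; [exact: cont_sub | move=> x; apply: (@cvg_id _ (nbhs x))].
  exact: hc.
apply: (squeeze_cvgr _ hD (cvg_cst 0)).
by near=> s; apply: r_bounds; near: s; exact: near_pos.
Unshelve. all: by end_near.
Qed.

Lemma lim2 : (fun s => s ^- 2 * (N (p s - theta) - N (t0 - theta))) @ 0^'+ --> N k.
Proof.
apply: (@cvg_trans _ ((fun s => N (qq s) - 2 * (dot (qq s) v / s)) @ 0^'+)).
  by apply: near_eq_cvg; near=> s; rewrite qq_id2 //; near: s; exact: near_pos.
suff : (fun s => N (qq s) - 2 * (dot (qq s) v / s)) @ 0^'+ --> N k - 2 * 0.
  by rewrite mulr0 subr0.
apply: cvgB.
  exact: (cvg_comp qq (fun u => N u) qq_cvg (@contN k)).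
apply: cvgM; [exact: cvg_cst | exact: r_cvg].
Unshelve. all: by end_near.
Qed.

Lemma bnd1 s : 0 < s -> 0 <= s ^- 2 * N (p s - t0) <= N z.
Proof. by move=> s0; rewrite qq_id1 // edot_ge0 qq_N. Qed.

Lemma bnd2 s : 0 < s ->
  0 <= s ^- 2 * (N (p s - theta) - N (t0 - theta)) <= 3 * N z.
Proof.
move=> s0; rewrite qq_id2 //.
have /andP[h1 h2] := r_bounds s0.
have := dot_zq z (qq s); have := qq_N s0; have := edot_ge0 (qq s).
move=> *; apply/andP; split; lra.
Qed.

End Local.
Section Main.
Variables (R : realType) (n : nat) (d : measure_display) (T : measurableType d).
Variable (P : probability T R).
Local Notation V := 'rV[R]_n.
Local Notation dot := (@edot R n).
Local Notation N u := (@edot R n u u).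
Variable Z : T -> V.
Hypothesis hZ : forall i : 'I_n, measurable_fun setT (fun w => Z w ord0 i).
Hypothesis hZ2 : forall i : 'I_n, (\int[P]_w ((Z w ord0 i) ^+ 2)%:E < +oo)%E.

Lemma cont_affine (theta : V) s : continuous (fun y : V => theta + s *: y).
Proof.
move=> y.
have h1 : (fun _ : V => theta) @ y --> theta by exact: (@cst_continuous V V theta y).
have h2 : (fun x : V => s *: x) @ y --> s *: y.
  by apply: (@cvgZ R V V (nbhs y) _ (fun _ => s) id); [exact: (@cst_continuous V R s y) | exact: (@cvg_id _ (nbhs y))].
exact: (@cvgD R V V (nbhs y) _ _ _ _ _ h1 h2).
Qed.

Lemma int_NZ : P.-integrable setT (fun w => (3 * N (Z w))%:E).
Proof.
have -> : (fun w => (3 * N (Z w))%:E) =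
    (fun w => (3%:E * \sum_(i < n) ((Z w ord0 i) ^+ 2)%:E)%E).
  apply/funext => w; rewrite sumEFin -EFinM /edot.
  by congr (_ * _)%:E; apply: eq_bigr => i _; rewrite expr2.
apply: integrableZl; first exact: measurableT.
apply: integrable_sum => [|i _]; first exact: measurableT.
apply/integrableP; split.
  by apply/measurable_EFinP; apply: measurable_funX; exact: hZ.
apply: le_lt_trans (hZ2 i); rewrite le_eqVlt; apply/orP; left; apply/eqP.
by apply: eq_integral => w _; rewrite gee0_abs // lee_fin sqr_ge0.
Qed.

Lemma dom (h : R -> T -> R) (l : T -> R) :
  (forall s w, 0 < s -> 0 <= h s w <= 3 * N (Z w)) ->
  (forall s, measurable_fun setT (h s)) ->
  (forall w, h ^~ w @ 0^'+ --> l w) ->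
  P.-integrable setT (fun w => (l w)%:E) ->
  (fun s => \int[P]_w (h s w)%:E)%E @ 0^'+ --> (\int[P]_w (l w)%:E)%E.
Proof.
move=> hb hm hl il.
have fin := integrable_fin_num measurableT il.
rewrite -(fineK fin).
apply/cvge_at_rightP => u [upos ucvg].
rewrite fineK //.
apply: (@dominated_cvg _ _ _ P setT measurableT (fun j w => (h (u j) w)%:E)
   (fun w => (l w)%:E) (fun w => (3 * N (Z w))%:E)).
- by move=> j; apply/measurable_EFinP; exact: hm.
- move=> w _; apply/fine_cvgP; split; first exact: nearW.
  by move/cvg_at_rightP : (hl w); apply; split.
- by move=> w _.
- exact: int_NZ.
- move=> j w _; have /andP[h1 h2] := hb (u j) w (upos j).
  by rewrite gee0_abs ?lee_fin.
Qed.

End Main.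
Lemma cont_h (R : realType) (n : nat) (C : set 'rV[R]_n) :
  C !=set0 -> closed C -> convex_set_rV C ->
  forall (theta a : 'rV[R]_n) (s c0 c1 : R),
  continuous (fun y : 'rV[R]_n =>
    c0 * (edot (eproj C (theta + s *: y) - a) (eproj C (theta + s *: y) - a) - c1)).
Proof.
move=> C0 Ccl Ccvx theta a s c0 c1.
have hG : continuous (fun y : 'rV[R]_n => eproj C (theta + s *: y) - a).
  move=> y.
  have h1 : (fun y => eproj C (theta + s *: y)) @ y --> eproj C (theta + s *: y).
    exact: (continuous_comp (@cont_affine R n theta s y) (@eproj_cont R n C C0 Ccl Ccvx _)).
  exact: (@cvgB R _ _ (nbhs y) _ _ _ _ _ h1 (@cst_continuous _ _ a y)).
have hN := cont_dot hG hG.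
move=> y.
apply: (@cvgM R _ (nbhs y) _ (fun _ => c0)); first exact: (@cst_continuous _ _ c0 y).
exact: (@cvgB R _ _ (nbhs y) _ _ _ _ _ (hN y) (@cst_continuous _ _ c1 y)).
Qed.

Theorem theorem1 (R : realType) (n : nat)
  (d : measure_display) (T : measurableType d) (P : probability T R)
  (C : set 'rV[R]_n) (theta : 'rV[R]_n) (Z : T -> 'rV[R]_n) :
  C !=set0 -> closed C -> convex_set_rV C ->
  (forall i : 'I_n, measurable_fun setT (fun w => Z w ord0 i)) ->
  (forall i : 'I_n, (\int[P]_w (Z w ord0 i)%:E = 0)%E) ->
  (forall i : 'I_n, (\int[P]_w ((Z w ord0 i) ^+ 2)%:E < +oo)%E) ->
  polyhedral_cone (tcone C (eproj C theta)) ->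
  (exists2 rs : R, 0 < rs &
     tcone C (eproj C theta) `&` eball 0 rs
     = feas C (eproj C theta) `&` eball 0 rs) ->
  let delta := (\int[P]_w
        (enorm (eproj (tcone C (eproj C theta) `&` orth (theta - eproj C theta))
                     (Z w)) ^+ 2)%:E)%E in
  ((fun s : R => ((s ^-2)%:E *
       \int[P]_w (enorm (eproj C (theta + s *: Z w) - eproj C theta) ^+ 2)%:E)%E)
     @ 0^'+ --> delta)
  /\
  ((fun s : R => ((s ^-2)%:E *
       (\int[P]_w (enorm (eproj C (theta + s *: Z w) - theta) ^+ 2)%:E
        - (enorm (eproj C theta - theta) ^+ 2)%:E))%E)
     @ 0^'+ --> delta).
Proof.
move=> C0 Ccl Ccvx hZ _ hZ2 poly [rs rs0 loc] delta.
set K := tcone C (eproj C theta) `&` orth (theta - eproj C theta).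
have KC0 : K !=set0 := K0 C0 Ccl theta.
have KCl : closed K := @K_closed R n C theta.
have KCvx : convex_set_rV K := K_convex poly.
have lK : P.-integrable setT (fun w => (edot (eproj K (Z w)) (eproj K (Z w)))%:E).
  apply: (le_integrable measurableT _ _ (int_NZ hZ hZ2)).
    apply/measurable_EFinP.
    apply: (@meas_comp_cont R n d T Z hZ (fun y => edot (eproj K y) (eproj K y))).
    move=> y; exact: (continuous_comp (@eproj_cont R n K KC0 KCl KCvx y) (@contN R n _)).
  move=> w _; rewrite !gee0_abs ?lee_fin ?edot_ge0 //; last first.
    by rewrite mulr_ge0 // edot_ge0.
  have := k_N C0 Ccl poly (Z w); have := edot_ge0 (Z w); rewrite -/K; lra.
have deltaE : delta = (\int[P]_w (edot (eproj K (Z w)) (eproj K (Z w)))%:E)%E.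
  by apply: eq_integral => w _; rewrite enorm_sq.
rewrite deltaE; split.
- apply: (@cvg_trans _ ((fun s => \int[P]_w (s ^- 2 * edot (eproj C (theta + s *: Z w) - eproj C theta) (eproj C (theta + s *: Z w) - eproj C theta))%:E)%E @ 0^'+)).
    apply: near_eq_cvg; near=> s.
    have s0 : 0 < s by near: s; exact: nbhs_right_gt.
    rewrite -ge0_integralZl_EFin //.
    + by apply: eq_integral => w _; rewrite enorm_sq EFinM.
    + by move=> w _; rewrite lee_fin sqr_ge0.
    + apply/measurable_EFinP.
      have := @meas_comp_cont R n d T Z hZ _ (@cont_h R n C C0 Ccl Ccvx theta (eproj C theta) s 1 0).
      apply: eq_measurable_fun => w _; rewrite mul1r subr0 enorm_sq //.
    + by rewrite invr_ge0 exprn_ge0 // ltW.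
  apply: dom => //.
  + move=> s w s0; have /andP[h1 h2] := bnd1 C0 Ccl Ccvx theta (Z w) s0.
    rewrite h1 /=; apply: (le_trans h2); have := edot_ge0 (Z w); lra.
  + move=> s.
    have := @meas_comp_cont R n d T Z hZ _ (@cont_h R n C C0 Ccl Ccvx theta (eproj C theta) s (s ^- 2) 0).
    by apply: eq_measurable_fun => w _; rewrite subr0.
  + by move=> w; exact: (lim1 C0 Ccl Ccvx poly rs0 loc).
- set c := edot (eproj C theta - theta) (eproj C theta - theta).
  apply: (@cvg_trans _ ((fun s => \int[P]_w (s ^- 2 * (edot (eproj C (theta + s *: Z w) - theta) (eproj C (theta + s *: Z w) - theta) - c))%:E)%E @ 0^'+)).
    apply: near_eq_cvg; near=> s.
    have s0 : 0 < s by near: s; exact: nbhs_right_gt.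
    have mb : measurable_fun setT (fun w => edot (eproj C (theta + s *: Z w) - theta) (eproj C (theta + s *: Z w) - theta) - c).
      have := @meas_comp_cont R n d T Z hZ _ (@cont_h R n C C0 Ccl Ccvx theta theta s 1 c).
      by apply: eq_measurable_fun => w _; rewrite mul1r.
    have b0 w : 0 <= edot (eproj C (theta + s *: Z w) - theta) (eproj C (theta + s *: Z w) - theta) - c.
      have := bnd2 C0 Ccl Ccvx theta (Z w) s0 => /andP[h1 _].
      by move: h1; rewrite pmulr_rge0 // invr_gt0 exprn_gt0.
    have hI : (\int[P]_w (enorm (eproj C (theta + s *: Z w) - theta) ^+ 2)%:E
        - (enorm (eproj C theta - theta) ^+ 2)%:E)%E =
        (\int[P]_w (edot (eproj C (theta + s *: Z w) - theta) (eproj C (theta + s *: Z w) - theta) - c)%:E)%E.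
      rewrite (_ : (fun w => (enorm (eproj C (theta + s *: Z w) - theta) ^+ 2)%:E) =
         (fun w => ((edot (eproj C (theta + s *: Z w) - theta) (eproj C (theta + s *: Z w) - theta) - c)%:E + c%:E)%E)); last first.
        by apply/funext => w; rewrite enorm_sq -EFinD subrK.
      have f10 : forall w, setT w -> (0 <= (edot (eproj C (theta + s *: Z w) - theta) (eproj C (theta + s *: Z w) - theta) - c)%:E)%E.
        by move=> w _; rewrite lee_fin.
      have f20 : forall w : T, setT w -> (0 <= c%:E)%E.
        by move=> w _; rewrite lee_fin edot_ge0.
      have mf1 : measurable_fun setT (fun w => (edot (eproj C (theta + s *: Z w) - theta) (eproj C (theta + s *: Z w) - theta) - c)%:E).
        exact/measurable_EFinP.
      rewrite (ge0_integralD P measurableT f10 mf1 f20 (measurable_cst _)).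
      rewrite (_ : (fun w => c%:E) = cst c%:E) // integral_cst //.
      have hP1 : forall A, A = P [set: T] -> A = 1%E by move=> A ->; exact: probability_setT.
      rewrite [X in (_ * X)%E]hP1 // mule1.
      by rewrite enorm_sq addeK.
    rewrite hI -ge0_integralZl_EFin //; last 3 first.
    + by move=> w _; rewrite lee_fin.
    + exact/measurable_EFinP.
    + by rewrite invr_ge0 exprn_ge0 // ltW.
  apply: dom => //.
  + move=> s w s0; have /andP[h1 h2] := bnd2 C0 Ccl Ccvx theta (Z w) s0.
    by rewrite h1 h2.
  + move=> s.
    exact: (@meas_comp_cont R n d T Z hZ _ (@cont_h R n C C0 Ccl Ccvx theta theta s (s ^- 2) c)).
  + by move=> w; exact: (lim2 C0 Ccl Ccvx poly rs0 loc).
Unshelve. all: by end_near.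
Qed.
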